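(* Let $f(x,y)=\left(x+\frac1y,\ y-\frac1y-x\right)$ be the Hénon–Devaney map. For $n\ge1$ let $U_n$ be the set of $t\in\mathbb{R}$ such that $f^{k}(t,-t)$ is defined and does not lie on $\{y=0\}$ for every $k=0,1,\dots,n-1$ (so that $f^{n}(t,-t)$ is defined), and write $f^{n}(t,-t)=(f^n_x(t,-t),f^n_y(t,-t))$. Then for every $n\ge1$: (a) on each connected component of $U_n$, $t\mapsto f^n_x(t,-t)$ is increasing and $t\mapsto f^n_y(t,-t)$ is decreasing; (b) $f^{n-1}(\{y=-x\})\cap f^{n}(\{y=-x\})=\emptyset$, where $f^{k}(\{y=-x\})=\{f^k(t,-t):t\in U_k\}$ for $k\ge1$ and $f^0(\{y=-x\})=\{y=-x\}$. *)

(* Defs.v *)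
From HB Require Import structures.
From mathcomp Require Import all_boot all_order all_algebra.
From mathcomp Require Import all_classical all_reals all_analysis.
Set Implicit Arguments. Unset Strict Implicit. Unset Printing Implicit Defensive.
Import Order.TTheory GRing.Theory Num.Theory numFieldNormedType.Exports.
Local Open Scope classical_set_scope.
Local Open Scope ring_scope.

Definition hd_step (R : realType) (p : R * R) : option (R * R) :=
  if p.2 == 0 then None
  else Some (p.1 + p.2^-1, p.2 - p.2^-1 - p.1).

Fixpoint hd_iter (R : realType) (k : nat) (p : R * R) : option (R * R) :=
  match k with
  | 0 => Some p
  | k'.+1 => match hd_iter k' p with
             | Some q => hd_step q
             | None => None
             end
  end.

Definition hd_U (R : realType) (n : nat) : set R :=
  [set t | forall k, (k < n)%N ->
     exists q, hd_iter k (t, - t) = Some q /\ q.2 != 0].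

Definition hd_image (R : realType) (k : nat) : set (R * R) :=
  if k is 0 then [set p | p.2 = - p.1]
  else [set p | exists2 t, hd_U k t & hd_iter k (t, - t) = Some p].

(* Main.v *)
Require Import Defs.
From HB Require Import structures.
From mathcomp Require Import all_boot all_order all_algebra.
From mathcomp Require Import all_classical all_reals all_analysis.
From mathcomp Require Import ring lra.
Import Order.TTheory GRing.Theory Num.Theory numFieldNormedType.Exports.
Local Open Scope classical_set_scope.
Local Open Scope ring_scope.

Section S.
Variable R : realType.

Definition stepT (p : R * R) : R * R := (p.1 + p.2^-1, p.2 - p.2^-1 - p.1).
Fixpoint G (k : nat) (t : R) : R * R :=
  match k with 0 => (t, - t) | k'.+1 => stepT (G k' t) end.

Lemma step_ok q : q.2 != 0 -> hd_step q = Some (stepT q).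
Proof. by move=> q0; rewrite /hd_step (negbTE q0). Qed.

Lemma G_iter n t : hd_U n t -> forall k, (k <= n)%N -> hd_iter k (t, -t) = Some (G k t).
Proof.
move=> U; elim=> [|k IH] hk; first reflexivity.
have [q [Hq q0]] := U k hk.
have E := IH (ltnW hk).
rewrite E in Hq; case: Hq => Eq; rewrite -Eq in q0.
simpl; rewrite E; exact: step_ok.
Qed.

Lemma G_ne0 n t : hd_U n t -> forall k, (k < n)%N -> (G k t).2 != 0.
Proof.
move=> U k hk; have [q [Hq q0]] := U k hk.
rewrite (@G_iter n t U k (ltnW hk)) in Hq; case: Hq => Eq; by rewrite Eq.
Qed.

Lemma G_cont k t : (forall j, (j < k)%N -> (G j t).2 != 0) ->
  {for t, continuous (fun u => (G k u).1)} /\ {for t, continuous (fun u => (G k u).2)}.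
Proof.
elim: k => [|k IH] H.
  split; [exact: cvg_id | exact: (@continuousN _ _ _ id t cvg_id)].
have [c1 c2] := IH (fun j hj => H j (ltnW hj)).
have nz : (G k t).2 != 0 := H k (ltnSn k).
have cv := @continuousV _ _ (fun u => (G k u).2) t nz c2.
split.
  exact: (continuousD c1 cv).
exact: (continuousB (continuousB c2 cv) c1).
Qed.

Lemma G_mono n s t : s < t -> (forall u, s <= u <= t -> hd_U n u) ->
  forall k, (k <= n)%N -> (G k s).1 < (G k t).1 /\ (G k t).2 < (G k s).2.
Proof.
move=> st HU; elim=> [|k IH] hk.
  rewrite /=; split; [exact: st | by rewrite ltrN2].
have [a1 a2] := IH (ltnW hk).
have Us : hd_U n s by apply: HU; rewrite lexx ltW.
have Ut : hd_U n t by apply: HU; rewrite lexx ltW.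
have ns := @G_ne0 n s Us k hk.
have nt := @G_ne0 n t Ut k hk.
set ys := (G k s).2 in a2 ns *; set yt := (G k t).2 in a2 nt *.
have prod : 0 < ys * yt.
  have [ys0|ys0] := ltrP 0 ys; last first.
    have ys0' : ys < 0 by rewrite lt_neqAle ys0 andbT.
    rewrite -mulrNN; apply: mulr_gt0; rewrite oppr_gt0 //; exact: lt_trans a2 ys0'.
  apply: mulr_gt0 => //.
  rewrite ltNge; apply/negP => yt0.
  have cont : {within `[s, t], continuous (fun u => (G k u).2)}.
    apply: continuous_in_subspaceT => x; rewrite inE /= in_itv /= => xin.
    have Ux := HU x xin.
    have [_ c2] := @G_cont k x (fun j hj => @G_ne0 n x Ux j (ltn_trans hj hk)).
    exact: c2.
  have hv : Num.min ys yt <= 0 <= Num.max ys yt.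
    by rewrite ge_min le_max yt0 (ltW ys0) !orbT.
  have [c cin c0] := @IVT R (fun u => (G k u).2) s t 0 (ltW st) cont hv.
  have Uc : hd_U n c by apply: HU; move: cin; rewrite in_itv.
  by move: (@G_ne0 n c Uc k hk); rewrite /= c0 eqxx.
have inv : ys^-1 < yt^-1.
  have -> : yt^-1 = ys^-1 + (ys - yt) / (ys * yt) by field; apply/andP.
  rewrite ltrDl; apply: divr_gt0 => //; by rewrite subr_gt0.
rewrite /=; split; rewrite /stepT /= -/ys -/yt; lra.
Qed.

Lemma step_inj (a b p : R * R) : hd_step a = Some p -> hd_step b = Some p -> a = b.
Proof.
rewrite /hd_step; case: eqP => // a0 [<-]; case: eqP => // b0 [E1 E2].
have e2 : a.2 = b.2 by lra.
have e1 : a.1 = b.1 by rewrite e2 in E1; lra.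
by case: a b e1 e2 {E1 E2 a0 b0} => [a1 a2] [b1 b2] /= -> ->.
Qed.

Lemma iter_inj k : forall a b p : R * R, hd_iter k a = Some p -> hd_iter k b = Some p -> a = b.
Proof.
elim: k => [|k IH] a b p /=; first by move=> [->] [->].
case Ea: (hd_iter k a) => [qa|] //; case Eb: (hd_iter k b) => [qb|] // Ha Hb.
have E := @step_inj qa qb p Ha Hb; rewrite E in Ea.
exact: IH _ _ _ Ea Eb.
Qed.

Lemma iter_shift k (a : R * R) : hd_iter k.+1 a =
  match hd_step a with Some q => hd_iter k q | None => None end.
Proof.
elim: k => [|k IH]; first by rewrite /=; case: (hd_step a).
change (match hd_iter k.+1 a with Some q => hd_step q | None => None end =
  match hd_step a with Some q => hd_iter k.+1 q | None => None end).
rewrite IH; case: (hd_step a) => // q.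
Qed.

End S.

Theorem mainTheorem5 (R : realType) (n : nat) (hn : (1 <= n)%N) :
  (forall (c s t : R) (ps pt : R * R),
      @hd_U R n c ->
      connected_component ((@hd_U R n)) c s ->
      connected_component ((@hd_U R n)) c t ->
      s < t ->
      hd_iter n (s, - s) = Some ps ->
      hd_iter n (t, - t) = Some pt ->
      ps.1 < pt.1 /\ pt.2 < ps.2)
  /\ @hd_image R n.-1 `&` @hd_image R n = set0.
Proof.
split.
  move=> c s t ps pt Uc [C1 [C1c C1U C1conn] C1s] [C2 [C2c C2U C2conn] C2t] st Hs Ht.
  have Cconn : connected (C1 `|` C2).
    by apply: connectedU => //; exists c.
  have Cint := (connected_intervalP _).1 Cconn.
  have HU : forall u, s <= u <= t -> hd_U n u.
    move=> u hu; have : (C1 `|` C2) u by apply: (Cint s t) => //; [left|right].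
    by case=> [/C1U|/C2U].
  have Us : hd_U n s by apply: HU; rewrite lexx ltW.
  have Ut : hd_U n t by apply: HU; rewrite lexx ltW.
  rewrite (@G_iter R n s Us n (leqnn n)) in Hs.
  rewrite (@G_iter R n t Ut n (leqnn n)) in Ht.
  case: Hs => <-; case: Ht => <-.
  exact: (@G_mono R n s t st HU n (leqnn n)).
case: n hn => [//|m] _.
rewrite -subset0 => p [H1 H2].
have [a [La Ha]] : exists a : R * R, a.2 = - a.1 /\ hd_iter m a = Some p.
  case: m H1 H2 => [|m] H1 H2; first by exists p.
  by case: H1 => u _ Hu; exists (u, - u).
case: H2 => t _ Ht.
rewrite iter_shift in Ht.
case Eb: (hd_step (t, - t)) Ht => [b|] // Hb.
have Eab := @iter_inj R _ _ _ _ Ha Hb; rewrite -Eab in Eb.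
move: Eb; rewrite /hd_step /=; case: eqP => // t0 [Ea].
apply: t0; rewrite -Ea /= in La; lra.
Qed.
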